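(* Let $\mathbb{K}$ be an algebraically closed field of characteristic zero, let $Y$ be an affine factorial variety over $\mathbb{K}$, and let $f\in\mathbb{K}[Y]$ be non-constant and non-invertible with $f=p_1^{a_1}\cdots p_s^{a_s}$, where $p_1,\dots,p_s$ are pairwise non-associated prime elements of $\mathbb{K}[Y]$ and $a_i\in\mathbb{Z}_{>0}$. Let $X=\{uv=f\}\subseteq\mathbb{A}^2_{u,v}\times Y$ and $\omega=(a_1,\dots,a_s)$. Then $\operatorname{Cl}(X)$ is torsion-free if and only if $\omega$ is a primitive vector of $\mathbb{Z}^s$ (i.e. $\gcd(a_1,\dots,a_s)=1$), equivalently, if and only if $f$ is not a proper power (there is no $k\ge2$ with $f=cg^k$ for some $g\in\mathbb{K}[Y]$ and invertible $c\in\mathbb{K}[Y]$). *)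

(* Defs.v *)
From HB Require Import structures.
From mathcomp Require Import all_boot all_order all_algebra.
From mathcomp Require Import mpoly.
From Stdlib Require Import ClassicalEpsilon.
Set Implicit Arguments. Unset Strict Implicit. Unset Printing Implicit Defensive.
Import Order.TTheory GRing.Theory Num.Theory.
Local Open Scope ring_scope.

Definition rdivides (R : comNzRingType) (a b : R) : Prop := exists c, b = c * a.

Definition prime_elt (R : comUnitRingType) (p : R) : Prop :=
  p != 0 /\ p \isn't a GRing.unit /\
  forall a b, rdivides p (a * b) -> rdivides p a \/ rdivides p b.

Definition associated (R : comUnitRingType) (a b : R) : Prop :=
  exists c, c \is a GRing.unit /\ a = c * b.

Definition factorial_domain (R : idomainType) : Prop :=
  forall x : R, x != 0 -> x \isn't a GRing.unit ->
    exists s : seq R, (forall p, p \in s -> prime_elt p) /\ x = \prod_(p <- s) p.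

Definition fin_gen_alg (K : fieldType) (R : comNzRingType)
  (iota : {rmorphism K -> R}) : Prop :=
  exists (n : nat) (phi : {rmorphism {mpoly K[n]} -> R}),
    (forall c, phi (mpolyC n c) = iota c) /\ (forall r, exists p, phi p = r).

Definition is_ideal (A : comNzRingType) (I : A -> Prop) : Prop :=
  I 0 /\ (forall x y, I x -> I y -> I (x + y)) /\ (forall a x, I x -> I (a * x)).

Definition prime_ideal (A : comNzRingType) (P : A -> Prop) : Prop :=
  is_ideal P /\ ~ P 1 /\ forall a b, P (a * b) -> P a \/ P b.

Definition height_one (A : comNzRingType) (P : A -> Prop) : Prop :=
  prime_ideal P /\ (exists x, P x /\ x != 0) /\
  forall Q : A -> Prop, prime_ideal Q -> (forall x, Q x -> P x) ->
    (forall x, Q x -> x = 0) \/ (forall x, P x -> Q x).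

Fixpoint ideal_pow (A : comNzRingType) (P : A -> Prop) (n : nat) : A -> Prop :=
  match n with
  | 0 => fun _ => True
  | m.+1 => fun x => exists s : seq (A * A),
      (forall pr, List.In pr s -> P pr.1 /\ ideal_pow P m pr.2) /\
      x = \sum_(pr <- s) pr.1 * pr.2
  end.

(* symbolic power P^(n) = P^n A_P ∩ A *)
Definition sym_pow (A : comNzRingType) (P : A -> Prop) (n : nat) (x : A) : Prop :=
  exists t, ~ P t /\ ideal_pow P n (t * x).

(* the order of x along the height-one prime P, i.e. the value at x of the
   discrete valuation of the (DVR) local ring A_P *)
Definition ordP (A : comNzRingType) (P : A -> Prop) (x : A) : nat :=
  epsilon (inhabits 0%N) (fun n => sym_pow P n x /\ ~ sym_pow P n.+1 x).

Definition weil_divisor (A : comNzRingType) (D : (A -> Prop) -> int) : Prop :=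
  (forall P, D P != 0 -> height_one P) /\
  exists s : seq (A -> Prop), forall P, D P != 0 -> List.In P s.

Definition principal_divisor (A : comNzRingType) (D : (A -> Prop) -> int) : Prop :=
  exists a b : A, a != 0 /\ b != 0 /\
    forall P, height_one P -> D P = (ordP P a)%:Z - (ordP P b)%:Z.

Definition class_group_torsion_free (A : comNzRingType) : Prop :=
  forall (D : (A -> Prop) -> int) (n : nat), weil_divisor D -> (0 < n)%N ->
    principal_divisor (fun P => D P *+ n) -> principal_divisor D.

(* Main.v *)
Require Import Defs.
From HB Require Import structures.
From mathcomp Require Import all_boot all_order all_algebra.
From mathcomp Require Import mpoly.
From mathcomp Require Import ring zify.
From Stdlib Require Import ClassicalEpsilon Classical FunctionalExtensionality PropExtensionality.
Set Implicit Arguments. Unset Strict Implicit. Unset Printing Implicit Defensive.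
Import Order.TTheory GRing.Theory Num.Theory.
Local Open Scope ring_scope.

Lemma ex_min (Q : nat -> Prop) : (exists n, Q n) -> exists n, Q n /\ forall m, (m < n)%N -> ~ Q m.
Proof.
case=> n; elim: n {-2}n (leqnn n) => [|n IH] k Hk Qk.
  by exists k; split=> // m; move: Hk; rewrite leqn0 => /eqP ->.
case: (classic (exists m, (m < k)%N /\ Q m)) => [[m [Hm Qm]]|H].
  by apply: (IH m) => //; rewrite -ltnS (leq_trans Hm Hk).
by exists k; split=> // m Hm Qm; apply: H; exists m.
Qed.

Section Generic.
Variable A : comNzRingType.

Lemma ideal_pow_ideal (P : A -> Prop) n : is_ideal P -> is_ideal (ideal_pow P n).
Proof.
move=> [P0 [PD PM]]; case: n => [|n] /=; first by [].
split; first by exists [::]; rewrite big_nil.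
split.
  move=> x y [s [Hs ->]] [t [Ht ->]]; exists (s ++ t); split; last by rewrite big_cat.
  by move=> pr Hin; case: (List.in_app_or _ _ _ Hin) => ?; [apply: Hs|apply: Ht].
move=> a x [s [Hs ->]]; exists (map (fun pr => (a * pr.1, pr.2)) s); split.
  move=> pr Hin0; have [pr' [<- Hin]] := proj1 (List.in_map_iff _ _ _) Hin0; have [H1 H2] := Hs _ Hin; split=> //.
  exact: PM.
rewrite big_map mulr_sumr; apply: eq_bigr => pr _ /=; by rewrite mulrA.
Qed.

Lemma ideal_pow_mul (P : A -> Prop) m a z : P a -> ideal_pow P m z -> ideal_pow P m.+1 (a * z).
Proof.
move=> Pa Hz; exists [:: (a, z)]; split; last by rewrite big_cons big_nil addr0.
by move=> pr [<-|[]].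
Qed.

Definition Cw (w g : A) (n : nat) (x : A) : Prop :=
  exists M y, w ^+ M * x = g ^+ n * y.

Definition Pw (w g : A) : A -> Prop := fun x => Cw w g 1 x.

Definition domain_prop := forall x y : A, x * y = 0 -> x = 0 \/ y = 0.

Lemma Cw0 w g x : Cw w g 0 x.
Proof. by exists 0%N, x; rewrite !expr0. Qed.

Lemma Cw_S w g n x : Cw w g n.+1 x -> Cw w g n x.
Proof. by move=> [M [y E]]; exists M, (g * y); rewrite E exprS mulrA (mulrC _ g). Qed.

Lemma Cw_le w g m n x : (m <= n)%N -> Cw w g n x -> Cw w g m x.
Proof.
move=> /subnK <-; elim: (n - m)%N => [|k IH] //= H.
by apply: IH; apply: Cw_S; rewrite -addSn.
Qed.

Lemma CwD w g n x y : Cw w g n x -> Cw w g n y -> Cw w g n (x + y).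
Proof.
move=> [M [a Ea]] [N [b Eb]]; exists (M + N)%N, (w ^+ N * a + w ^+ M * b).
rewrite exprD.
transitivity (w ^+ N * (w ^+ M * x) + w ^+ M * (w ^+ N * y)); first ring.
rewrite Ea Eb; ring.
Qed.

Lemma CwMl w g n a x : Cw w g n x -> Cw w g n (a * x).
Proof.
by move=> [M [y E]]; exists M, (a * y); transitivity (a * (w ^+ M * x)); [ring|rewrite E; ring].
Qed.

Lemma CwM w g m n x y : Cw w g m x -> Cw w g n y -> Cw w g (m + n) (x * y).
Proof.
move=> [M [a Ea]] [N [b Eb]]; exists (M + N)%N, (a * b).
rewrite exprD; transitivity ((w ^+ M * x) * (w ^+ N * y)); [ring|rewrite Ea Eb exprD; ring].
Qed.

Lemma Cw_unitg w g n x e e' : e' * e = 1 -> (Cw w (e * g) n x <-> Cw w g n x).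
Proof.
move=> He; split=> [[M [y E]]|[M [y E]]].
  by exists M, (e ^+ n * y); rewrite E exprMn; ring.
exists M, (e' ^+ n * y); rewrite E exprMn.
transitivity (g ^+ n * ((e' * e) ^+ n * y)); first by rewrite He expr1n mul1r.
by rewrite exprMn; ring.
Qed.

Lemma Cw_wpow w g n N x : Cw w g n (w ^+ N * x) <-> Cw w g n x.
Proof.
split=> [[M [y E]]|[M [y E]]].
  by exists (M + N)%N, y; rewrite exprD -mulrA.
exists M, (w ^+ N * y); rewrite mulrCA E; ring.
Qed.

Section Prime.
Hypothesis domA : domain_prop.
Variables w g : A.
Hypothesis g0 : g != 0.
Hypothesis G1 : forall a b, Cw w g 1 (a * b) -> Cw w g 1 a \/ Cw w g 1 b.
Hypothesis G2 : ~ Cw w g 1 1.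

Lemma expg_neq0 k : g ^+ k != 0.
Proof.
elim: k => [|k IH]; first by rewrite expr0 oner_neq0.
rewrite exprS; apply/eqP => /domA [] /eqP; by [rewrite (negPf g0)|rewrite (negPf IH)].
Qed.

Lemma cancel_g k x y : g ^+ k * x = g ^+ k * y -> x = y.
Proof.
move=> /eqP; rewrite -subr_eq0 -mulrBr => /eqP /domA [/eqP|/eqP].
  by rewrite (negPf (expg_neq0 k)).
by rewrite subr_eq0 => /eqP.
Qed.

Lemma Pw_prime : prime_ideal (Pw w g).
Proof.
split; last by split; [exact: G2|exact: G1].
split; first by exists 0%N, 0; rewrite !mulr0.
by split; [move=> x y; apply: CwD|move=> a x; apply: CwMl].
Qed.

Lemma Pw_w M : ~ Pw w g (w ^+ M).
Proof.
move=> [N [y E]]; apply: G2; exists (N + M)%N, y; by rewrite mulr1 exprD.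
Qed.

Lemma Pw_g : Pw w g g.
Proof. by exists 0%N, 1; rewrite expr0 mul1r expr1 mulr1. Qed.

Lemma Cw_g n y : Cw w g n (g ^+ n * y).
Proof. by exists 0%N, y; rewrite expr0 mul1r. Qed.

Lemma Cw_cancel t n x : ~ Pw w g t -> Cw w g n (t * x) -> Cw w g n x.
Proof.
move=> Ht; elim: n x => [|n IH] x; first by move=> _; apply: Cw0.
move=> H; have := Cw_le (isT : (1 <= n.+1)%N) H => /G1 [//|[M1 [x1 E1]]].
move: H => [M [y E]].
have : Cw w g n (t * x1).
  exists (M)%N, (w ^+ M1 * y); apply: (@cancel_g 1%N).
  transitivity (w ^+ M * t * (g ^+ 1 * x1)); first ring.
  rewrite -E1; transitivity (w ^+ M1 * (w ^+ M * (t * x))); first ring.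
  rewrite E exprS; ring.
move=> /IH [M2 [y2 E2]]; exists (M1 + M2)%N, y2.
rewrite exprD; transitivity (w ^+ M2 * (w ^+ M1 * x)); first ring.
rewrite E1; transitivity (g * (w ^+ M2 * x1)); first by rewrite expr1; ring.
rewrite E2 exprS; ring.
Qed.

Lemma ideal_pow_Cw n x : ideal_pow (Pw w g) n x -> Cw w g n x.
Proof.
elim: n x => [|n IH] x; first by move=> _; apply: Cw0.
move=> [s [Hs ->]]; elim: s Hs => [|pr s IHs] Hs.
  by rewrite big_nil; exists 0%N, 0; rewrite !mulr0.
rewrite big_cons; apply: CwD; last by apply: IHs => pr' Hin; apply: Hs; right.
have [H1 H2] := Hs pr (or_introl erefl).
by rewrite -add1n; apply: CwM => //; apply: IH.
Qed.

Lemma sym_powE n x : sym_pow (Pw w g) n x <-> Cw w g n x.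
Proof.
split.
  by move=> [t [Ht Hp]]; apply: (Cw_cancel Ht); apply: ideal_pow_Cw.
move=> [M [y E]]; exists (w ^+ M); split; first exact: Pw_w.
rewrite E; elim: n y {E} => [|n IH] y //=.
by rewrite exprS -mulrA; apply: ideal_pow_mul; [apply: Pw_g|apply: IH].
Qed.

Lemma ordP_spec x : (exists n, ~ Cw w g n x) ->
  Cw w g (ordP (Pw w g) x) x /\ ~ Cw w g (ordP (Pw w g) x).+1 x.
Proof.
move=> Hx; have [[|n] [Hn Hmin]] := ex_min Hx; first by case: Hn; apply: Cw0.
have Hn' : Cw w g n x by apply: NNPP; apply: Hmin.
have : exists k, sym_pow (Pw w g) k x /\ ~ sym_pow (Pw w g) k.+1 x.
  by exists n; rewrite !sym_powE.
move=> /(epsilon_spec (inhabits 0%N)); rewrite /ordP !sym_powE; by [].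
Qed.

Lemma ordP_le x n : (exists n, ~ Cw w g n x) ->
  (Cw w g n x <-> (n <= ordP (Pw w g) x)%N).
Proof.
move=> Hx; have [H1 H2] := ordP_spec Hx; split=> [H|H]; last exact: Cw_le H H1.
by rewrite leqNgt; apply/negP => Hlt; apply: H2; apply: Cw_le Hlt H.
Qed.

Lemma ordP_eq x n : Cw w g n x -> ~ Cw w g n.+1 x -> ordP (Pw w g) x = n.
Proof.
move=> H1 H2; have Hx : exists n, ~ Cw w g n x by exists n.+1.
apply/eqP; rewrite eqn_leq; apply/andP; split; last by apply/ordP_le.
have [_ H3] := ordP_spec Hx; rewrite leqNgt; apply/negP => Hlt.
by apply: H2; apply: Cw_le Hlt (proj1 (ordP_spec Hx)).
Qed.

Lemma ordP_not x : ~ Pw w g x -> ordP (Pw w g) x = 0%N.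
Proof. by move=> H; apply: ordP_eq => //; apply: Cw0. Qed.

Lemma ordP_M x y : (exists n, ~ Cw w g n x) -> (exists n, ~ Cw w g n y) ->
  ordP (Pw w g) (x * y) = (ordP (Pw w g) x + ordP (Pw w g) y)%N.
Proof.
move=> Hx Hy; have [Cx Nx] := ordP_spec Hx; have [Cy Ny] := ordP_spec Hy.
set m := ordP _ x in Cx Nx *; set n := ordP _ y in Cy Ny *.
clearbody m n.
apply: ordP_eq; first exact: CwM.
move: Cx Cy => [M1 [x1 E1]] [M2 [y2 E2]].
have Nx1 : ~ Pw w g x1.
  move=> [K [z Ez]]; apply: Nx; exists (K + M1)%N, z.
  rewrite exprD; transitivity (w ^+ K * (w ^+ M1 * x)); first ring.
  by rewrite E1; transitivity (g ^+ m * (w ^+ K * x1)); [ring|rewrite Ez expr1 exprS; ring].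
have Ny2 : ~ Pw w g y2.
  move=> [K [z Ez]]; apply: Ny; exists (K + M2)%N, z.
  rewrite exprD; transitivity (w ^+ K * (w ^+ M2 * y)); first ring.
  by rewrite E2; transitivity (g ^+ n * (w ^+ K * y2)); [ring|rewrite Ez expr1 exprS; ring].
move=> [M [z Ez]].
have : Cw w g 1 (x1 * y2).
  exists M, (w ^+ (M1 + M2) * z); apply: (@cancel_g (m + n)%N).
  transitivity (w ^+ M * ((g ^+ m * x1) * (g ^+ n * y2))); first by rewrite exprD; ring.
  rewrite -E1 -E2; transitivity (w ^+ M1 * w ^+ M2 * (w ^+ M * (x * y))); first ring.
  by rewrite Ez expr1 exprS !exprD; ring.
by move=> /G1 [].
Qed.

End Prime.
End Generic.

Section IdomFact.
Variable S : idomainType.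
Implicit Types a b c p q x y z : S.

Lemma rdiv_mulr a b c : rdivides a b -> rdivides a (b * c).
Proof. by move=> [d ->]; exists (d * c); ring. Qed.

Lemma rdiv_mull a b c : rdivides a b -> rdivides a (c * b).
Proof. by move=> [d ->]; exists (c * d); ring. Qed.

Lemma rdivD a b c : rdivides a b -> rdivides a c -> rdivides a (b + c).
Proof. by move=> [d ->] [e ->]; exists (d + e); ring. Qed.

Lemma rdivN a b : rdivides a b -> rdivides a (- b).
Proof. by move=> [d ->]; exists (- d); ring. Qed.

Lemma rdiv0 a : rdivides a 0.
Proof. by exists 0; rewrite mul0r. Qed.

Lemma rdiv_refl a : rdivides a a.
Proof. by exists 1; rewrite mul1r. Qed.

Lemma rdiv_trans a b c : rdivides a b -> rdivides b c -> rdivides a c.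
Proof. by move=> [d ->] [e ->]; exists (e * d); ring. Qed.

Lemma rdiv_unit p e : prime_elt p -> e \is a GRing.unit -> ~ rdivides p e.
Proof.
move=> [_ [pN _]] eU [d Ed]; move: eU; rewrite Ed unitrM => /andP [_ pU].
by rewrite pU in pN.
Qed.

Lemma prime_neq0 p : prime_elt p -> p != 0.
Proof. by case. Qed.

Lemma prime_dvd_assoc p x : prime_elt p -> prime_elt x -> rdivides p x ->
  exists e, e \is a GRing.unit /\ x = e * p.
Proof.
move=> Pp Px [d Ed]; have [x0 [_ Hx]] := Px.
have : rdivides x (d * p) by rewrite -Ed; apply: rdiv_refl.
move=> /Hx [[e Ee]|[e Ee]].
  exfalso; have : x * (e * p) = x * 1 by rewrite mulr1 {2}Ed Ee; ring.
  move=> /(mulfI x0) Hep; have [_ [pN _]] := Pp; move/negP: pN; apply.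
  by apply/unitrPr; exists e; rewrite mulrC Hep.
exists d; split=> //; apply/unitrPr; exists e.
apply: (mulfI x0); rewrite mulr1 {2}Ed Ee; ring.
Qed.

Lemma prime_dvd_prod p s : prime_elt p -> rdivides p (\prod_(x <- s) x) ->
  exists2 x, x \in s & rdivides p x.
Proof.
move=> Pp; elim: s => [|x s IH]; first by rewrite big_nil => /(rdiv_unit Pp (unitr1 _)).
rewrite big_cons => /(proj2 (proj2 Pp)) [H|/IH [y ys Hy]]; first by exists x; rewrite ?mem_head.
by exists y; rewrite // in_cons ys orbT.
Qed.

Definition factored (z : S) := exists c s, c \is a GRing.unit /\
  (forall x, x \in s -> prime_elt x) /\ z = c * \prod_(x <- s) x.

Lemma factored_neq0 z : factored z -> z != 0.
Proof.
move=> [c [s [cU [Ps ->]]]]; rewrite mulf_eq0 negb_or; apply/andP; split.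
  by apply/eqP => c0; move: cU; rewrite c0 unitr0.
rewrite prodf_seq_eq0; apply/hasPn => x /Ps /prime_neq0 //.
Qed.

Lemma factoredM y z : factored y -> factored z -> factored (y * z).
Proof.
move=> [c [s [cU [Ps ->]]]] [d [t [dU [Pt ->]]]]; exists (c * d), (s ++ t).
split; first by rewrite unitrM cU dU.
split; first by move=> x; rewrite mem_cat => /orP [/Ps|/Pt].
by rewrite big_cat /=; ring.
Qed.

Lemma factored_prime p : prime_elt p -> factored p.
Proof.
by move=> Pp; exists 1, [:: p]; rewrite unitr1 big_seq1 mul1r; split=> //; split=> // x;
  rewrite mem_seq1 => /eqP ->.
Qed.

Lemma factored_unit e : e \is a GRing.unit -> factored e.
Proof. by move=> eU; exists e, [::]; rewrite big_nil mulr1. Qed.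

Lemma remove_prime z c s q z' : c \is a GRing.unit -> (forall x, x \in s -> prime_elt x) ->
  z = c * \prod_(x <- s) x -> prime_elt q -> z = q * z' ->
  exists c' s', [/\ c' \is a GRing.unit, (forall x, x \in s' -> prime_elt x),
     z' = c' * \prod_(x <- s') x & (size s').+1 = size s].
Proof.
move=> cU Ps Ez Pq Ez'; have q0 := prime_neq0 Pq.
elim: s c z z' cU Ps Ez Ez' => [|x s IH] c z z' cU Ps Ez Ez'.
  exfalso; apply: (rdiv_unit Pq cU); exists z'; rewrite big_nil mulr1 in Ez.
  by rewrite -Ez Ez' mulrC.
have Px : prime_elt x by apply: Ps; rewrite mem_head.
have Ps' : forall y, y \in s -> prime_elt y by move=> y ys; apply: Ps; rewrite in_cons ys orbT.
have : rdivides q (x * (c * \prod_(y <- s) y)).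
  by exists z'; rewrite [z' * q]mulrC -Ez' Ez big_cons; ring.
move=> /(proj2 (proj2 Pq)) [Hx|Hr].
  have [e [eU Ee]] := prime_dvd_assoc Pq Px Hx.
  exists (c * e), s; split=> //; first by rewrite unitrM cU eU.
  apply: (mulfI q0); rewrite -Ez' Ez big_cons Ee; ring.
have [d Ed] := Hr.
have [c' [s' [c'U Ps'' Ed' Hs]]] := IH c _ d cU Ps' erefl (etrans Ed (mulrC _ _)).
exists c', (x :: s'); split=> //.
- by move=> y; rewrite in_cons => /orP [/eqP ->|/Ps''].
- apply: (mulfI q0); rewrite -Ez' Ez big_cons big_cons.
  transitivity (x * (c * \prod_(y <- s) y)); first ring.
  by rewrite Ed Ed'; ring.
- by rewrite /= Hs.
Qed.

Lemma remove_pow z c s q n z' : c \is a GRing.unit -> (forall x, x \in s -> prime_elt x) ->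
  z = c * \prod_(x <- s) x -> prime_elt q -> z = q ^+ n * z' ->
  exists c' s', [/\ c' \is a GRing.unit, (forall x, x \in s' -> prime_elt x),
     z' = c' * \prod_(x <- s') x & (size s' + n)%N = size s].
Proof.
move=> cU Ps Ez Pq; elim: n z' => [|n IH] z' Ez'.
  by exists c, s; rewrite addn0; split=> //; move: Ez'; rewrite expr0 mul1r => <-.
have E0 : z = q ^+ n * (q * z') by rewrite Ez' exprS; ring.
have [c1 [s1 [c1U Ps1 E1 H1]]] := IH (q * z') E0.
have [c2 [s2 [c2U Ps2 E2 H2]]] := remove_prime c1U Ps1 E1 Pq erefl.
by exists c2, s2; split=> //; rewrite -H1 -H2 addnS addSn.
Qed.

Lemma fin_pow z q : prime_elt q -> factored z -> exists n, ~ rdivides (q ^+ n) z.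
Proof.
move=> Pq [c [s [cU [Ps Ez]]]]; exists (size s).+1 => [[y Ey]].
have [c' [s' [_ _ _ H]]] := remove_pow cU Ps Ez Pq (etrans Ey (mulrC _ _)).
by move: H; rewrite addnS => /eqP; rewrite eqn_leq ltnNge leq_addl.
Qed.

Lemma pow_cancel q w c n K : prime_elt q -> ~ rdivides q w ->
  rdivides (q ^+ n) (w ^+ K * c) -> rdivides (q ^+ n) c.
Proof.
move=> Pq qw; have q0 := prime_neq0 Pq.
have qwK : ~ rdivides q (w ^+ K).
  elim: K => [|K IH]; first by rewrite expr0; apply: rdiv_unit => //; exact: unitr1.
  by rewrite exprS => /(proj2 (proj2 Pq)) [].
elim: n c => [|n IH] c; first by move=> _; exists c; rewrite expr0 mulr1.
move=> H; have : rdivides q (w ^+ K * c).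
  by apply: rdiv_trans H; exists (q ^+ n); rewrite exprS mulrC.
move=> /(proj2 (proj2 Pq)) [//|[c1 Ec]].
have : rdivides (q ^+ n) c1.
  apply: IH; have [d Ed] := H; exists d; apply: (mulIf q0).
  transitivity (w ^+ K * c); first by rewrite Ec; ring.
  by rewrite Ed exprSr; ring.
by move=> [d Ed']; exists d; rewrite Ec Ed' exprS; ring.
Qed.

End IdomFact.

Section PolyUFD.
Variable R : idomainType.
Hypothesis ufdR : factorial_domain R.
Local Notation PR := {poly R}.

Lemma fact_R (r : R) : r != 0 -> factored r.
Proof.
move=> r0; case: (boolP (r \is a GRing.unit)) => rU; first exact: factored_unit.
have [s [Ps Er]] := ufdR r0 rU; exists 1, s; split; first exact: unitr1.
by split=> //; rewrite mul1r.
Qed.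

Lemma dvdC_coef (p : R) (g : PR) : rdivides p%:P g <-> forall i, rdivides p g`_i.
Proof.
split; first by move=> [c ->] i; exists c`_i; rewrite coefMC.
elim/poly_ind: g => [|g c IH] H; first exact: rdiv0.
have Hg : forall i, rdivides p g`_i.
  by move=> i; have := H i.+1; rewrite coefD coefMX coefC /= addr0.
have [d Ed] := IH Hg; have [e Ee] : rdivides p c by have := H 0%N; rewrite coefD coefMX coefC /= add0r.
by exists (d * 'X + e%:P); rewrite Ed Ee polyCM; ring.
Qed.

Lemma primeC (p : R) : prime_elt p -> prime_elt (p%:P : PR).
Proof.
move=> Pp; have [p0 [pN pP]] := Pp; split; first by rewrite polyC_eq0.
split; first by rewrite poly_unitE coefC /= (negPf pN) andbF.
move=> g h Hgh; apply: NNPP => Hn; have [Hg Hh] := not_or_and _ _ Hn.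
have : ~ (forall i, rdivides p g`_i) by move=> H; apply: Hg; apply/dvdC_coef.
move=> /not_all_ex_not /ex_min [i [Hi Hmi]].
have : ~ (forall i, rdivides p h`_i) by move=> H; apply: Hh; apply/dvdC_coef.
move=> /not_all_ex_not /ex_min [j [Hj Hmj]].
have := proj1 (dvdC_coef _ _) Hgh (i + j)%N; rewrite coefM.
have Hij : (i < (i + j).+1)%N by rewrite ltnS leq_addr.
rewrite (bigD1 (Ordinal Hij)) //= addKn => Hc.
have Hrest : rdivides p (\sum_(k < (i + j).+1 | k != Ordinal Hij) g`_k * h`_(i + j - k)).
  apply: (big_ind (fun x => rdivides p x)); [exact: rdiv0|move=> x y; apply: rdivD|].
  move=> k; rewrite -val_eqE /= => kNi.
  case: (ltngtP k i) kNi => // [ki|ik] _.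
    by apply: rdiv_mulr; apply: NNPP; apply: Hmi.
  apply: rdiv_mull; apply: NNPP; apply: Hmj.
  by have := ltn_ord k; lia.
have : rdivides p (g`_i * h`_j).
  have := rdivD Hc (rdivN Hrest); by rewrite addrK.
by move=> /pP [].
Qed.

Definition primitive (c : PR) := forall p, prime_elt p -> ~ rdivides p%:P c.

Lemma CP (c0 : PR) (lam : R) X Y : primitive c0 -> lam != 0 ->
  lam%:P * X = c0 * Y -> rdivides c0 X.
Proof.
move=> Pc lam0; have [e [s [eU [Ps Elam]]]] := fact_R lam0.
elim: s lam e Y eU Ps Elam {lam0} => [|p s IH] lam e Y eU Ps Elam E.
  exists (e^-1%:P * Y); rewrite big_nil mulr1 in Elam.
  transitivity ((e^-1 * e)%:P * X); first by rewrite mulVr // mul1r.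
  by rewrite polyCM -mulrA -Elam E; ring.
have Pp : prime_elt p by apply: Ps; rewrite mem_head.
have : rdivides p%:P (c0 * Y).
  by exists ((e * \prod_(x <- s) x)%:P * X); rewrite -E Elam big_cons !polyCM; ring.
move=> /(proj2 (proj2 (primeC Pp))) [/(Pc _ Pp) //|[Y1 EY]].
apply: (IH (e * \prod_(x <- s) x) e Y1 eU) => //.
  by move=> x xs; apply: Ps; rewrite in_cons xs orbT.
apply: (mulIf (x := p%:P)); first by rewrite polyC_eq0 prime_neq0.
transitivity (lam%:P * X); first by rewrite Elam big_cons !polyCM; ring.
by rewrite E EY; ring.
Qed.

Lemma size_polyCM (p : R) (G : PR) : p != 0 -> size (G * p%:P) = size G.
Proof. by move=> p0; rewrite mulrC mul_polyC size_scale. Qed.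

Lemma CP2 (c0 G H : PR) (lam : R) : lam != 0 -> lam%:P * c0 = G * H ->
  exists G' H', c0 = G' * H' /\ size G' = size G /\ size H' = size H.
Proof.
move=> lam0; have [e [s [eU [Ps Elam]]]] := fact_R lam0.
elim: s lam e G H eU Ps Elam {lam0} => [|p s IH] lam e G H eU Ps Elam E.
  rewrite big_nil mulr1 in Elam; exists (e^-1%:P * G), H; split; last split=> //.
    transitivity ((e^-1 * e)%:P * c0); first by rewrite mulVr // mul1r.
    by rewrite polyCM -mulrA -Elam E; ring.
  by rewrite mul_polyC size_scale // invr_eq0; apply/eqP => e0; move: eU; rewrite e0 unitr0.
have Pp : prime_elt p by apply: Ps; rewrite mem_head.
have p0 : p != 0 := prime_neq0 Pp.
have Ps' : forall x, x \in s -> prime_elt x by move=> x xs; apply: Ps; rewrite in_cons xs orbT.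
have : rdivides p%:P (G * H).
  by exists ((e * \prod_(x <- s) x)%:P * c0); rewrite -E Elam big_cons !polyCM; ring.
move=> /(proj2 (proj2 (primeC Pp))) [[G1 EG]|[H1 EH]].
  have [G' [H' [E' [S1 S2]]]] : exists G' H', c0 = G' * H' /\ size G' = size G1 /\ size H' = size H.
    apply: (IH (e * \prod_(x <- s) x) e G1 H eU Ps' erefl).
    apply: (mulIf (x := p%:P)); first by rewrite polyC_eq0.
    transitivity (lam%:P * c0); first by rewrite Elam big_cons !polyCM; ring.
    by rewrite E EG; ring.
  by exists G', H'; rewrite E' S1 S2 EG size_polyCM.
have [G' [H' [E' [S1 S2]]]] : exists G' H', c0 = G' * H' /\ size G' = size G /\ size H' = size H1.
  apply: (IH (e * \prod_(x <- s) x) e G H1 eU Ps' erefl).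
  apply: (mulIf (x := p%:P)); first by rewrite polyC_eq0.
  transitivity (lam%:P * c0); first by rewrite Elam big_cons !polyCM; ring.
  by rewrite E EH; ring.
by exists G', H'; rewrite E' S1 S2 EH size_polyCM.
Qed.

Definition irrS (c : PR) := forall G H, c = G * H -> size G = 1%N \/ size H = 1%N.

Lemma prime_of_irr (c : PR) : primitive c -> irrS c -> (1 < size c)%N -> prime_elt c.
Proof.
move=> Pc Ic Sc.
have c0 : c != 0 by rewrite -size_poly_eq0 -lt0n (ltn_trans _ Sc).
split=> //; split; first by rewrite poly_unitE negb_and (gtn_eqF Sc).
move=> g h Hgh; apply: NNPP => Hn; have [Hg Hh] := not_or_and _ _ Hn.
pose J r := rdivides c (r * h).
have JD : forall a b, J a -> J b -> J (a + b) by move=> a b Ja Jb; rewrite /J mulrDl; apply: rdivD.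
have JN : forall a, J a -> J (- a) by move=> a Ja; rewrite /J mulNr; apply: rdivN.
have JM : forall a b, J b -> J (a * b) by move=> a b Jb; rewrite /J -mulrA; apply: rdiv_mull.
have Jc : J c by rewrite /J; apply: rdiv_mulr; apply: rdiv_refl.
have g0 : g != 0 by apply/eqP => g0; apply: Hg; rewrite g0; apply: rdiv0.
have : exists n, exists r, r != 0 /\ J r /\ size r = n by exists (size g), g.
move=> /ex_min [n [[r0 [r00 [Jr0 Sr0]]] Hmin]].
have Jmin : forall x, J x -> (size x < size r0)%N -> x = 0.
  move=> x Jx Sx; apply: NNPP => /eqP x0; apply: (Hmin (size x)); first by rewrite -Sr0.
  by exists x.
have Jdiv : forall a, J a -> (lead_coef r0 ^+ scalp a r0)%:P * a = (a %/ r0) * r0.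
  move=> a Ja; have E := Pdiv.Idomain.divp_eq a r0.
  have Jm : J (a %% r0).
    have -> : a %% r0 = (lead_coef r0 ^+ scalp a r0)%:P * a + - ((a %/ r0) * r0).
      by rewrite mul_polyC E; ring.
    by apply: JD; [apply: JM|apply: JN; apply: JM].
  have := Jmin _ Jm; rewrite Pdiv.Idomain.ltn_modp r00 => /(_ isT) m0.
  by rewrite mul_polyC E m0 addr0.
have lam0 : forall a, (lead_coef r0 ^+ scalp a r0) != 0.
  by move=> a; apply: Pdiv.Idomain.lc_expn_scalp_neq0.
have [Q' [r' [E' [S1 S2]]]] := CP2 (lam0 c) (Jdiv c Jc).
have [SQ|Sr] := Ic _ _ E'.
  have /size_poly1P [k k0 Ek] : size (c %/ r0) == 1%N by rewrite -S1 SQ.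
  apply: Hg; apply: (@CP c (k * lead_coef r0 ^+ scalp g r0) g ((g %/ r0) * (lead_coef r0 ^+ scalp c r0)%:P) Pc).
    by rewrite mulf_eq0 negb_or k0 lam0.
  rewrite polyCM -mulrA Jdiv //.
  transitivity ((g %/ r0) * (k%:P * r0)); first ring.
  by rewrite -Ek -Jdiv //; ring.
have /size_poly1P [k k0 Ek] : size r0 == 1%N by rewrite -S2 Sr.
have [Z EZ] := Jr0; apply: Hh; apply: (@CP c k h Z Pc k0).
by rewrite -Ek EZ mulrC.
Qed.

Lemma polyC_prodE (s : seq R) : (\prod_(x <- s) x)%:P = \prod_(x <- map polyC s) x.
Proof. by elim: s => [|x s IH]; rewrite ?big_nil // big_cons /= big_cons polyCM IH. Qed.

Lemma fact_const (r : R) : r != 0 -> factored (r%:P : PR).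
Proof.
move=> r0; have [e [s [eU [Ps Er]]]] := fact_R r0.
have e0 : e != 0 by apply/eqP => e0; move: eU; rewrite e0 unitr0.
exists e%:P, (map polyC s); split; first by rewrite poly_unitE size_polyC e0 coefC /= eU.
split; first by move=> x /mapP [y ys ->]; apply: primeC; apply: Ps.
by rewrite Er polyCM polyC_prodE.
Qed.

Lemma fact_poly (c : PR) : c != 0 -> factored c.
Proof.
move=> cn0; suff H : forall n (c : PR), (size c <= n)%N -> c != 0 -> factored c.
  exact: (H (size c) c (leqnn _) cn0).
clear c cn0; elim=> [|n IHn] c Hs c0; first by move: c0; rewrite -size_poly_eq0 -leqn0 Hs.
case: (ltnP (size c) n.+1) => [Hl|Hge]; first exact: IHn.
have Sc : size c = n.+1 by apply/eqP; rewrite eqn_leq Hs Hge.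
case: (ltnP 1 (size c)) => [S2|S1].
  2: { have /size_poly1P [k k0 ->] : size c == 1%N.
         by rewrite eqn_leq S1 lt0n size_poly_eq0.
       exact: fact_const. }
have prim_case : forall d : PR, size d = n.+1 -> (1 < size d)%N -> primitive d -> factored d.
  move=> d Sd Sd2 Pd.
  case: (classic (irrS d)) => [Id|NI]; first by apply: factored_prime; apply: prime_of_irr.
  have [G NG] := not_all_ex_not _ _ NI.
  have [H NH] := not_all_ex_not _ _ NG.
  have [EGH NS] := imply_to_and _ _ NH.
  have [SG SH] := not_or_and _ _ NS.
  have d0 : d != 0 by rewrite -size_poly_eq0 Sd.
  have G0 : G != 0 by apply/eqP => G0; move: d0; rewrite EGH G0 mul0r eqxx.
  have H0 : H != 0 by apply/eqP => H0; move: d0; rewrite EGH H0 mulr0 eqxx.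
  have := size_mul G0 H0; rewrite -EGH Sd => SGH.
  have SG0 : size G != 0%N by rewrite size_poly_eq0.
  have SH0 : size H != 0%N by rewrite size_poly_eq0.
  rewrite EGH; apply: factoredM; apply: IHn => //; lia.
have key : forall k (d : PR) e s, (size s <= k)%N -> e \is a GRing.unit ->
    (forall x, x \in s -> prime_elt x) -> lead_coef d = e * \prod_(x <- s) x ->
    size d = n.+1 -> (1 < size d)%N -> factored d.
  elim=> [|k IHk] d e s Hk eU Ps Elc Sd Sd2;
  (case: (classic (exists p, prime_elt p /\ rdivides p%:P d)) => [[p [Pp [d1 Ed]]]|Hp];
    last by apply: prim_case => // p Pp Hd; apply: Hp; exists p);
  have E : lead_coef d = p * lead_coef d1 by rewrite Ed lead_coefM lead_coefC mulrC.
    by have [c' [s' [_ _ _ Hs']]] := remove_prime eU Ps Elc Pp E; move: Hk; rewrite -Hs'.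
  have [c' [s' [c'U Ps' Elc' Hs']]] := remove_prime eU Ps Elc Pp E.
  have p0 : p != 0 := prime_neq0 Pp.
  have Sd1 : size d1 = size d by rewrite Ed size_polyCM.
  rewrite Ed; apply: factoredM; last by apply: factored_prime; apply: primeC.
  by apply: (IHk d1 c' s') => //; [rewrite -ltnS Hs'|rewrite Sd1|rewrite Sd1].
have lc0 : lead_coef c != 0 by rewrite lead_coef_eq0.
have [e [s [eU [Ps Elc]]]] := fact_R lc0.
exact: (key (size s) c e s (leqnn _) eU Ps Elc Sc S2).
Qed.

End PolyUFD.

Section RingA.
Variable R : idomainType.
Variable f : R.
Hypothesis f0 : f != 0.
Variable A : comNzRingType.
Variable pi : {rmorphism {poly {poly R}} -> A}.
Hypothesis pi_surj : forall x : A, exists q, pi q = x.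
Hypothesis pi_ker : forall q, pi q = 0 <-> exists h, q = h * ('X%:P * 'X - (f%:P)%:P).

Local Notation mm := ('X%:P * 'X - (f%:P)%:P : {poly {poly R}}).

Definition io (c : {poly R}) : A := pi (c%:P).
Definition uu : A := pi ('X%:P).
Definition vv : A := pi 'X.
Definition kap (r : R) : A := pi (r%:P%:P).

Lemma ioM c d : io (c * d) = io c * io d. Proof. by rewrite /io polyCM rmorphM. Qed.
Lemma ioD c d : io (c + d) = io c + io d. Proof. by rewrite /io polyCD rmorphD. Qed.
Lemma ioB c d : io (c - d) = io c - io d. Proof. by rewrite /io polyCB rmorphB. Qed.
Lemma io1 : io 1 = 1. Proof. by rewrite /io polyC1 rmorph1. Qed.
Lemma io0 : io 0 = 0. Proof. by rewrite /io polyC0 rmorph0. Qed.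
Lemma ioX c n : io (c ^+ n) = io c ^+ n. Proof. by rewrite /io polyC_exp rmorphXn. Qed.
Lemma io_C r : io r%:P = kap r. Proof. by []. Qed.
Lemma io_X : io 'X = uu. Proof. by []. Qed.
Lemma kapM r s : kap (r * s) = kap r * kap s. Proof. by rewrite -!io_C polyCM ioM. Qed.
Lemma kapX r n : kap (r ^+ n) = kap r ^+ n. Proof. by rewrite -!io_C polyC_exp ioX. Qed.
Lemma kap1 : kap 1 = 1. Proof. by rewrite -io_C polyC1 io1. Qed.

Lemma uv : uu * vv = kap f.
Proof.
have : pi mm = 0 by apply/pi_ker; exists 1; rewrite mul1r.
by rewrite rmorphB rmorphM /= => /eqP; rewrite subr_eq0 => /eqP.
Qed.

Lemma U1 x : exists N c, uu ^+ N * x = io c.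
Proof.
have [q <-] := pi_surj x; elim/poly_ind: q => [|q c [N [c' E]]].
  by exists 0%N, 0; rewrite rmorph0 mulr0 io0.
exists N.+1, (c' * f%:P + 'X ^+ N.+1 * c).
rewrite rmorphD rmorphM /= -/vv -/(io c) ioD !ioM ioX io_X io_C.
transitivity ((uu ^+ N * pi q) * (uu * vv) + uu ^+ N.+1 * io c); first by rewrite exprS; ring.
by rewrite E uv.
Qed.

Lemma size_mm : size mm = 2%N.
Proof.
rewrite size_addl size_mulX ?polyC_eq0 ?polyX_eq0 ?size_polyC ?polyX_eq0 //.
by rewrite size_polyN (leq_ltn_trans (size_polyC_leq1 _)).
Qed.

Lemma io_inj c : io c = 0 -> c = 0.
Proof.
move=> /pi_ker [h Eh]; apply/eqP; rewrite -polyC_eq0 Eh.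
case: (eqVneq h 0) => [->|h0]; first by rewrite mul0r.
have := size_polyC_leq1 c; rewrite Eh size_mul // ?size_mm; last by rewrite -size_poly_eq0 size_mm.
by rewrite addn2 /= ltnS leqn0 size_poly_eq0 (negPf h0).
Qed.

Lemma io_injE c d : io c = io d -> c = d.
Proof. by move=> E; apply/eqP; rewrite -subr_eq0; apply/eqP/io_inj; rewrite ioB E subrr. Qed.

Lemma drop1K (c : {poly R}) : c`_0 = 0 -> c = drop_poly 1 c * 'X.
Proof.
move=> c00; rewrite -{1}(poly_take_drop 1 c) expr1.
suff -> : take_poly 1 c = 0 by rewrite add0r.
by apply/polyP => i; rewrite coef_take_poly coef0; case: i => [|i] //=.
Qed.

Lemma u_reg x : uu * x = 0 -> x = 0.
Proof.
have [q <-] := pi_surj x; rewrite /uu -rmorphM => /pi_ker [h Eh].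
pose ev := map_poly (horner_eval (0 : R)).
have evM : forall a b, ev (a * b) = ev a * ev b by move=> a b; rewrite /ev rmorphM.
have evX : ev ('X%:P) = 0 by rewrite /ev map_polyC /= horner_evalE hornerX.
have evmm : ev mm = - f%:P.
  have evB : forall a b, ev (a - b) = ev a - ev b by move=> a b; rewrite /ev rmorphB.
  rewrite evB evM evX mul0r sub0r; congr (- _).
  by rewrite /ev map_polyC /= horner_evalE hornerC.
have Eev : ev h * (- f%:P) = 0 by rewrite -evmm -evM -Eh evM evX mul0r.
have evh : ev h = 0.
  by move/eqP: Eev; rewrite mulf_eq0 oppr_eq0 polyC_eq0 (negPf f0) orbF => /eqP.
have Hh : forall j, (h`_j)`_0 = 0.
  move=> j; have := congr1 (fun p : {poly R} => p`_j) evh; rewrite /= coef0 /ev coef_map /=.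
  by rewrite horner_evalE horner_coef0.
have Eh' : h = map_poly (drop_poly 1) h * 'X%:P.
  apply/polyP => j; rewrite coefMC coef_map_id0; last first.
    by apply/polyP => i; rewrite coef_drop_poly !coef0.
  exact: drop1K.
apply/pi_ker; exists (map_poly (drop_poly 1) h).
apply: (mulfI (x := 'X%:P)); first by rewrite polyC_eq0 polyX_eq0.
by rewrite Eh {1}Eh'; ring.
Qed.

Lemma upow_reg N x : uu ^+ N * x = 0 -> x = 0.
Proof.
elim: N x => [|N IH] x; first by rewrite expr0 mul1r.
by rewrite exprS -mulrA => /u_reg /IH.
Qed.

Lemma domA : domain_prop A.
Proof.
move=> x y Exy; have [N [c Ec]] := U1 x; have [M [d Ed]] := U1 y.
have : io (c * d) = 0.
  rewrite ioM -Ec -Ed; transitivity (uu ^+ N * uu ^+ M * (x * y)); first ring.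
  by rewrite Exy mulr0.
move=> /io_inj /eqP; rewrite mulf_eq0 => /orP [/eqP c0|/eqP d0].
  by left; apply: (@upow_reg N x); rewrite Ec c0 io0.
by right; apply: (@upow_reg M y); rewrite Ed d0 io0.
Qed.


Definition projA (x : A) : {poly {poly R}} := epsilon (inhabits 0) (fun q => pi q = x).
Lemma projA_spec x : pi (projA x) = x.
Proof. exact: (epsilon_spec (inhabits 0) (fun q => pi q = x) (pi_surj x)). Qed.
Definition sig (x : A) : A := pi (swapXY (projA x)).

Lemma swap_mm : swapXY mm = mm.
Proof. by rewrite rmorphB rmorphM /= swapXY_Y swapXY_X swapXY_polyC map_polyC mulrC. Qed.

Lemma sigE q : sig (pi q) = pi (swapXY q).
Proof.
have : pi (projA (pi q) - q) = 0 by rewrite rmorphB projA_spec subrr.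
move=> /pi_ker [h Eh]; apply/eqP; rewrite -subr_eq0 /sig.
have -> : pi (swapXY (projA (pi q))) - pi (swapXY q) = pi (swapXY (projA (pi q) - q)).
  by rewrite (raddfB swapXY) (raddfB pi).
rewrite Eh rmorphM /= swap_mm.
by apply/eqP/pi_ker; exists (swapXY h).
Qed.

Lemma sigD x y : sig (x + y) = sig x + sig y.
Proof. by rewrite -(projA_spec x) -(projA_spec y) -rmorphD !sigE !rmorphD. Qed.
Lemma sigM x y : sig (x * y) = sig x * sig y.
Proof. by rewrite -(projA_spec x) -(projA_spec y) -rmorphM !sigE !rmorphM. Qed.
Lemma sig1 : sig 1 = 1.
Proof. by rewrite -(rmorph1 pi) sigE !rmorph1. Qed.
Lemma sig0 : sig 0 = 0.
Proof. by rewrite -(rmorph0 pi) sigE !rmorph0. Qed.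
Lemma sigK x : sig (sig x) = x.
Proof. by rewrite -(projA_spec x) !sigE swapXYK. Qed.
Lemma sig_u : sig uu = vv.
Proof. by rewrite /uu sigE swapXY_Y. Qed.
Lemma sig_v : sig vv = uu.
Proof. by rewrite /vv sigE swapXY_X. Qed.
Lemma sig_kap r : sig (kap r) = kap r.
Proof. by rewrite /kap sigE swapXY_polyC map_polyC. Qed.
Lemma sigX x n : sig (x ^+ n) = sig x ^+ n.
Proof. by elim: n => [|n IH]; rewrite ?expr0 ?sig1 // !exprS sigM IH. Qed.
Lemma sig_eq0 x : sig x = 0 -> x = 0.
Proof. by move=> E; rewrite -(sigK x) E sig0. Qed.

Lemma C_sig w g n x : Cw w g n x -> Cw (sig w) (sig g) n (sig x).
Proof. by move=> [M [y E]]; exists M, (sig y); rewrite -sigX -sigM E sigM sigX. Qed.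

Lemma C_sigE w g n x : Cw w g n (sig x) <-> Cw (sig w) (sig g) n x.
Proof.
split=> [/C_sig|H]; first by rewrite sigK.
by have := C_sig H; rewrite !sigK.
Qed.

Lemma Pw_sig w g : (fun x => Pw w g (sig x)) = Pw (sig w) (sig g).
Proof.
apply: functional_extensionality => x; apply: propositional_extensionality.
exact: C_sigE.
Qed.

Lemma ho_sig (P : A -> Prop) : height_one P -> height_one (fun x => P (sig x)).
Proof.
move=> [[[P0 [PD PM]] [P1 PP]] [[x [Px x0]] Pmin]].
split; first split.
- split; first by rewrite sig0.
  by split=> [a b Pa Pb|a b Pb]; rewrite ?sigD ?sigM; [apply: PD|apply: PM].
- split; first by rewrite sig1.
  by move=> a b; rewrite sigM; apply: PP.
split.
  exists (sig x); rewrite sigK; split=> //; apply/eqP => /sig_eq0 E; by rewrite E eqxx in x0.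
move=> Q [[Q0 [QD QM]] [Q1 QP]] QP'.
have := Pmin (fun y => Q (sig y)).
case.
- split; first split.
  + by rewrite sig0.
  + by split=> [a b Qa Qb|a b Qb]; rewrite ?sigD ?sigM; [apply: QD|apply: QM].
  + split; first by rewrite sig1.
    by move=> a b; rewrite sigM; apply: QP.
- by move=> y /QP' H; rewrite sigK in H.
- move=> H; left => y Qy; apply: sig_eq0; apply: H; exact: (eq_ind _ (fun z => Q z) Qy _ (esym (sigK y))).
- by move=> H; right => y Py; rewrite -(sigK y); apply: H.
Qed.

Hypothesis ufdR : factorial_domain R.

Lemma primeX : prime_elt ('X : {poly R}).
Proof.
have rX : forall c : {poly R}, rdivides 'X c <-> c.[0] = 0.
  move=> c; split=> [[d ->]|H]; first by rewrite hornerM hornerX mulr0.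
  have /factor_theorem [d Ed] : root c 0 by apply/eqP.
  by exists d; rewrite Ed subr0.
split; first by rewrite polyX_eq0.
split; first by rewrite poly_unitE size_polyX.
move=> a b /rX; rewrite hornerM => /eqP; rewrite mulf_eq0 => /orP [] /eqP H.
  by left; apply/rX.
by right; apply/rX.
Qed.

Definition uprime (q : {poly R}) := prime_elt q /\ ~ rdivides q 'X.

Lemma Cu_char q n c : uprime q -> (Cw uu (io q) n (io c) <-> rdivides (q ^+ n) c).
Proof.
move=> [Pq qX]; split; last by move=> [d ->]; exists 0%N, (io d); rewrite expr0 mul1r ioM ioX mulrC.
move=> [M [y E]]; have [N [y' Ey]] := U1 y.
apply: (pow_cancel (w := 'X) (K := (M + N)%N)) => //.
exists y'; apply: io_injE; rewrite ioM ioX io_X ioM ioX exprD.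
transitivity (uu ^+ N * (uu ^+ M * io c)); first ring.
by rewrite E -Ey; ring.
Qed.

Lemma u_G1 q : uprime q -> forall a b, Cw uu (io q) 1 (a * b) -> Cw uu (io q) 1 a \/ Cw uu (io q) 1 b.
Proof.
move=> Hq a b H; have [Na [a' Ea]] := U1 a; have [Nb [b' Eb]] := U1 b.
have : Cw uu (io q) 1 (io (a' * b')).
  rewrite ioM -Ea -Eb; have : Cw uu (io q) 1 (uu ^+ (Na + Nb) * (a * b)) by apply/Cw_wpow.
  by congr Cw; rewrite exprD; ring.
move=> /(Cu_char _ _ Hq); rewrite expr1 => /(proj2 (proj2 (proj1 Hq))) [] H'.
  by left; apply/(Cw_wpow _ _ _ Na); rewrite Ea; apply/(Cu_char _ _ Hq); rewrite expr1.
by right; apply/(Cw_wpow _ _ _ Nb); rewrite Eb; apply/(Cu_char _ _ Hq); rewrite expr1.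
Qed.

Lemma u_G2 q : uprime q -> ~ Cw uu (io q) 1 1.
Proof.
move=> Hq; rewrite -io1 => /(Cu_char _ _ Hq); rewrite expr1.
by apply: rdiv_unit; [exact: (proj1 Hq)|exact: unitr1].
Qed.

Lemma u_g0 q : uprime q -> io q != 0.
Proof. by move=> [Pq _]; apply/eqP => /io_inj /eqP; apply/negP/prime_neq0. Qed.

Lemma u_fin q x : uprime q -> x != 0 -> exists n, ~ Cw uu (io q) n x.
Proof.
move=> Hq x0; have [N [c Ec]] := U1 x.
have c0 : c != 0.
  by apply/eqP => c0; move: x0; rewrite (@upow_reg N x) ?eqxx // Ec c0 io0.
have [n Hn] := fin_pow (proj1 Hq) (fact_poly ufdR c0).
by exists n => H; apply: Hn; apply/(Cu_char _ _ Hq); rewrite -Ec; apply/Cw_wpow.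
Qed.

Lemma uprimeC p : prime_elt p -> uprime p%:P.
Proof.
move=> Pp; split; first exact: primeC.
move=> [c Ec]; have := congr1 (fun r : {poly R} => r`_1) Ec; rewrite /= coefX coefMC /=.
move=> E1; have [_ [pN _]] := Pp; move/negP: pN; apply; apply/unitrPr; exists c`_1.
by rewrite mulrC -E1.
Qed.

Lemma Cv_char p n x : Cw vv (kap p) n x <-> Cw uu (kap p) n (sig x).
Proof. by rewrite C_sigE sig_u sig_kap. Qed.

Lemma v_G1 p : prime_elt p -> forall a b, Cw vv (kap p) 1 (a * b) -> Cw vv (kap p) 1 a \/ Cw vv (kap p) 1 b.
Proof.
move=> Pp a b; rewrite !Cv_char sigM -io_C; apply: u_G1; exact: uprimeC.
Qed.

Lemma v_G2 p : prime_elt p -> ~ Cw vv (kap p) 1 1.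
Proof. by move=> Pp; rewrite Cv_char sig1 -io_C; apply: u_G2; apply: uprimeC. Qed.

Lemma v_g0 p : prime_elt p -> kap p != 0.
Proof. by move=> Pp; rewrite -io_C; apply: u_g0; apply: uprimeC. Qed.

Lemma v_fin p x : prime_elt p -> x != 0 -> exists n, ~ Cw vv (kap p) n x.
Proof.
move=> Pp x0; have sx0 : sig x != 0 by apply/eqP => /sig_eq0 E; rewrite E eqxx in x0.
have [n Hn] := u_fin (uprimeC Pp) sx0; exists n; by rewrite Cv_char -io_C.
Qed.


Hypothesis fN : f \isn't a GRing.unit.


Definition good (w g : A) := [/\ g != 0,
  (forall a b : A, Cw w g 1 (a * b) -> Cw w g 1 a \/ Cw w g 1 b),
  ~ Cw w g 1 1 & (forall x, x != 0 -> exists n, ~ Cw w g n x)].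

Lemma good_u q : uprime q -> good uu (io q).
Proof. by move=> Hq; split; [exact: u_g0|exact: u_G1|exact: u_G2|move=> x; exact: u_fin]. Qed.

Lemma good_v r : prime_elt r -> good vv (kap r).
Proof. by move=> Hr; split; [exact: v_g0|exact: v_G1|exact: v_G2|move=> x; exact: v_fin]. Qed.

Lemma ordG_prime w g : good w g -> prime_ideal (Pw w g).
Proof. by case=> _ G1 G2 _; apply: Pw_prime. Qed.

Lemma ordG_le w g x n : good w g -> x != 0 -> (Cw w g n x <-> (n <= ordP (Pw w g) x)%N).
Proof. by case=> g0 G1 G2 Fin x0; apply: (ordP_le domA g0 G1 G2); apply: Fin. Qed.

Lemma ordG_eq w g x n : good w g -> Cw w g n x -> ~ Cw w g n.+1 x -> ordP (Pw w g) x = n.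
Proof. by case=> g0 G1 G2 Fin; apply: (ordP_eq domA g0 G1 G2). Qed.

Lemma ordG_not w g x : good w g -> ~ Pw w g x -> ordP (Pw w g) x = 0%N.
Proof. by case=> g0 G1 G2 Fin; apply: (ordP_not domA g0 G1 G2). Qed.

Lemma ordG_M w g x y : good w g -> x != 0 -> y != 0 ->
  ordP (Pw w g) (x * y) = (ordP (Pw w g) x + ordP (Pw w g) y)%N.
Proof. by case=> g0 G1 G2 Fin x0 y0; apply: (ordP_M domA g0 G1 G2); apply: Fin. Qed.

Lemma ordG_X w g x n : good w g -> x != 0 ->
  ordP (Pw w g) (x ^+ n) = (n * ordP (Pw w g) x)%N.
Proof.
move=> Hg x0; elim: n => [|n IH].
  rewrite expr0 mul0n; apply: (ordG_not Hg) => H; by case: Hg => _ _ G2 _.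
have xn0 : x ^+ n != 0.
  elim: (n) => [|k IHk]; first by rewrite expr0 oner_neq0.
  rewrite exprS; apply/eqP => /domA [] /eqP; by [rewrite (negPf x0)|rewrite (negPf IHk)].
by rewrite exprS (ordG_M Hg) // IH mulSn.
Qed.

Lemma ordG_w w g x M : good w g -> x != 0 -> ordP (Pw w g) (w ^+ M * x) = ordP (Pw w g) x.
Proof.
move=> Hg x0; have [g0 G1 G2 Fin] := Hg.
have Fx := Fin x x0.
have [H1 H2] := ordP_spec domA g0 G1 G2 Fx.
apply: (ordG_eq Hg); first by apply/Cw_wpow.
by move=> /Cw_wpow.
Qed.

Lemma ordG_unit w g x y : good w g -> y * x = 1 -> ordP (Pw w g) x = 0%N.
Proof.
move=> Hg E; apply: (ordG_not Hg) => Px; case: Hg => _ _ G2 _; apply: G2.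
by rewrite -E; apply: CwMl.
Qed.

Definition PU q := Pw uu (io q).
Definition PV r := Pw vv (kap r).

Lemma PU_prime q : uprime q -> prime_ideal (PU q).
Proof. by move=> Hq; apply: ordG_prime; apply: good_u. Qed.

Lemma PV_prime r : prime_elt r -> prime_ideal (PV r).
Proof. by move=> Hr; apply: ordG_prime; apply: good_v. Qed.

Lemma PV_sig r : PV r = (fun x => PU r%:P (sig x)).
Proof. by rewrite /PU Pw_sig sig_u io_C sig_kap. Qed.

Lemma pi_prod (Q : A -> Prop) (T : Type) (F : T -> A) (s : seq T) :
  prime_ideal Q -> Q (\prod_(x <- s) F x) -> exists2 x, List.In x s & Q (F x).
Proof.
move=> [_ [Q1 QP]]; elim: s => [|x s IH]; first by rewrite big_nil.
rewrite big_cons => /QP [Hx|/IH [y ys Hy]]; first by exists x => //; left.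
by exists y => //; right.
Qed.

Lemma pi_unit (Q : A -> Prop) x y : prime_ideal Q -> y * x = 1 -> ~ Q x.
Proof. by move=> [[_ [_ QM]] [Q1 _]] E Qx; apply: Q1; rewrite -E; apply: QM. Qed.

Lemma pi_pow (Q : A -> Prop) x n : prime_ideal Q -> Q (x ^+ n) -> Q x.
Proof.
move=> HQ; elim: n => [|n IH]; first by rewrite expr0 => H; case: (proj1 (proj2 HQ)).
by rewrite exprS => /(proj2 (proj2 HQ)) [//|/IH].
Qed.

Lemma io_unitA e : e \is a GRing.unit -> io e^-1 * io e = 1.
Proof. by move=> eU; rewrite -ioM mulVr // io1. Qed.

Lemma In_mem (T : eqType) (x : T) s : x \in s -> List.In x s.
Proof. by elim: s => [|y s IH] //; rewrite in_cons => /orP [/eqP ->|/IH]; [left|right]. Qed.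

Lemma find_uprime (Q : A -> Prop) y : prime_ideal Q -> ~ Q uu -> Q y -> y != 0 ->
  exists q, uprime q /\ Q (io q).
Proof.
move=> HQ Qu Qy y0; have [[Q0 [QD QM]] [Q1 QP]] := HQ.
have [N [c Ec]] := U1 y.
have c0 : c != 0 by apply/eqP => c0; move: y0; rewrite (@upow_reg N y) ?eqxx // Ec c0 io0.
have Qc : Q (io c) by rewrite -Ec; apply: QM.
have [e [s [eU [Ps Ec']]]] := fact_poly ufdR c0.
move: Qc; rewrite Ec' ioM => /QP [/(pi_unit HQ (io_unitA eU)) //|].
rewrite (big_morph io ioM io1) => /(pi_prod HQ) [x xs Qx].
have Px : prime_elt x by apply: Ps; move: xs; elim: (s) => // z t IH [->|/IH]; rewrite in_cons ?eqxx // => ->; rewrite orbT.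
exists x; split=> //; split=> // /(prime_dvd_assoc Px primeX) [e' [e'U Ee']].
by apply: Qu; rewrite -io_X Ee' ioM; apply: QM.
Qed.

Lemma PU_ho q : uprime q -> height_one (PU q).
Proof.
move=> Hq; split; first exact: PU_prime.
split; first by exists (io q); split; [apply: Pw_g|apply: u_g0].
move=> Q HQ HQP; have [[Q0 [QD QM]] [Q1 QP]] := HQ.
case: (classic (exists y, Q y /\ y != 0)) => [[y [Qy y0]]|H]; last first.
  by left => y Qy; apply: NNPP => /eqP y0; apply: H; exists y.
right.
have Qu : ~ Q uu by move=> /HQP; rewrite -[uu]expr1; apply: Pw_w; apply: u_G2.
have [q' [Hq' Qq']] := find_uprime HQ Qu Qy y0.
have /(Cu_char _ _ Hq) : PU q (io q') by apply: HQP.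
rewrite expr1 => /(prime_dvd_assoc (proj1 Hq) (proj1 Hq')) [e [eU Ee]].
have Qq : Q (io q).
  move: Qq'; rewrite Ee ioM => /QP [/(pi_unit HQ (io_unitA eU))|] //.
move=> x [M [z E]].
have : Q (uu ^+ M * x) by rewrite E expr1 mulrC; apply: QM.
by move=> /QP [/(pi_pow HQ)|].
Qed.

Lemma PV_ho r : prime_elt r -> height_one (PV r).
Proof. by move=> Hr; rewrite PV_sig; apply: ho_sig; apply: PU_ho; apply: uprimeC. Qed.

Lemma take1C (T : nzSemiRingType) (p : {poly T}) : take_poly 1 p = (p`_0)%:P.
Proof. by apply/polyP => i; rewrite coef_take_poly coefC; case: i. Qed.

Lemma Tlem q : exists N0, forall N, (N0 <= N)%N ->
  exists E, uu ^+ N * pi q = io E /\ rdivides f (E`_N - (q`_0)`_0).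
Proof.
elim/poly_ind: q => [|q c [N0 IH]].
  exists 0%N => N _; exists 0; rewrite rmorph0 mulr0 io0 !coef0 subrr; split=> //.
  exact: rdiv0.
exists N0.+1 => [[|N]] // HN; have [E' [E1 _]] := IH N HN.
exists (E' * f%:P + 'X ^+ N.+1 * c); split.
  rewrite rmorphD rmorphM /= -/vv -/(io c) ioD !ioM ioX io_X io_C.
  transitivity ((uu ^+ N * pi q) * (uu * vv) + uu ^+ N.+1 * io c); first by rewrite exprS; ring.
  by rewrite E1 uv.
rewrite coefD coefMC coefXnM ltnn subnn coefD coefMX coefC /= add0r addrK.
by exists (E'`_N.+1).
Qed.

Lemma PUC_sub (P : A -> Prop) r : prime_ideal P -> rdivides r f -> P uu -> P vv -> P (kap r) ->
  forall x, PU r%:P x -> P x.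
Proof.
move=> [[P0 [PD PM]] _] rf Pu Pv Pr x [M [y Ey]].
have [q Eq] := pi_surj x; have [qy Eqy] := pi_surj y.
have [N0 Hq] := Tlem q; have [N1 Hqy] := Tlem qy.
have [Ey' [E1 _]] := Hqy (N1 + N0)%N (leq_addr _ _).
have [Ex [E2 H2]] := Hq (N1 + N0 + M)%N (leq_trans (leq_addl _ _) (leq_addr _ _)).
have EEx : Ex = r%:P * Ey'.
  apply: io_injE; rewrite -E2 ioM -E1 Eqy Eq exprD -mulrA Ey io_C expr1; ring.
have rT : rdivides r ((q`_0)`_0).
  have : rdivides r (Ex`_(N1 + N0 + M)) by rewrite EEx coefCM; exists Ey'`_(N1 + N0 + M); ring.
  move=> H1; have := rdivD H1 (rdivN (rdiv_trans rf H2)); by rewrite opprB addrC subrK.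
have [t Et] := rT.
have Eq' : q = ((q`_0)`_0)%:P%:P + (drop_poly 1 (q`_0))%:P * 'X%:P + drop_poly 1 q * 'X.
  rewrite -{1}(poly_take_drop 1 q) take1C -{1}(poly_take_drop 1 (q`_0)) take1C !expr1.
  by rewrite polyCD polyCM.
rewrite -Eq Eq' Et !rmorphD.
apply: (PD); first apply: (PD).
- by rewrite -[pi _]/(kap (t * r)) kapM; apply: (PM).
- by rewrite rmorphM; apply: (PM); exact: Pu.
- by rewrite rmorphM; apply: (PM); exact: Pv.
Qed.

Lemma caseA (P : A -> Prop) : height_one P -> ~ P uu -> exists q, uprime q /\ P = PU q.
Proof.
move=> [HP [[y [Py y0]] Pmin]] Pu.
have [[P0 [PD PM]] [P1 PP]] := HP.
have [q [Hq Pq]] := find_uprime HP Pu Py y0.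
have sub : forall x, PU q x -> P x.
  move=> x [M [z E]]; have : P (uu ^+ M * x) by rewrite E expr1 mulrC; apply: PM.
  by move=> /PP [/(pi_pow HP)|].
exists q; split=> //.
case: (Pmin (PU q) (PU_prime Hq) sub) => [H0|H].
  by have := H0 _ (Pw_g uu (io q)); move: (u_g0 Hq) => /eqP.
apply: functional_extensionality => x; apply: propositional_extensionality.
by split; [apply: H|apply: sub].
Qed.

Lemma mem_prod_dvd (T : idomainType) (x : T) s : x \in s -> rdivides x (\prod_(y <- s) y).
Proof. by move=> xs; rewrite (big_rem x xs) /=; exists (\prod_(y <- rem x s) y); rewrite mulrC. Qed.

Lemma kap_unitA e : e \is a GRing.unit -> kap e^-1 * kap e = 1.
Proof. by move=> eU; rewrite -kapM mulVr // kap1. Qed.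

Lemma ho_classify (P : A -> Prop) : height_one P ->
  (exists q, uprime q /\ P = PU q) \/ (exists r, prime_elt r /\ rdivides r f /\ P = PV r).
Proof.
move=> HoP; have [HP [_ Pmin]] := HoP; have [[P0 [PD PM]] [P1 PP]] := HP.
case: (classic (P uu)) => Pu; last by left; apply: caseA.
right.
have Pf : P (kap f) by rewrite -uv mulrC; apply: PM.
have [e [s [eU [Ps Ef]]]] := fact_R ufdR f0.
have Pv : ~ P vv.
  move=> Pv; move: Pf; rewrite Ef kapM => /PP [/(pi_unit HP (kap_unitA eU))|] //.
  rewrite (big_morph kap kapM kap1) => /(pi_prod HP) [r rs Pr].
  have rs' : r \in s.
    by move: rs; elim: (s) => // z t IH [->|/IH]; rewrite in_cons ?eqxx // => ->; rewrite orbT.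
  have Pr' : prime_elt r := Ps r rs'.
  have rf : rdivides r f by rewrite Ef; apply: rdiv_mull; apply: mem_prod_dvd.
  have sub := PUC_sub HP rf Pu Pv Pr.
  case: (Pmin _ (PU_prime (uprimeC Pr')) sub) => [H0|H].
    by have := H0 _ (Pw_g uu (io r%:P)); move: (u_g0 (uprimeC Pr')) => /eqP.
  by have := H _ Pu; rewrite -[uu]expr1; apply: Pw_w; apply: u_G2; apply: uprimeC.
have Pv' : ~ (fun x => P (sig x)) uu by rewrite /= sig_u.
have [q [Hq EP']] := caseA (ho_sig HoP) Pv'.
have EP : P = fun x => PU q (sig x).
  by rewrite -EP'; apply: functional_extensionality => x; rewrite sigK.
have : PU q (kap f).
  have : PU q (sig uu) by move: Pu; rewrite EP.
  by rewrite sig_u -uv => H; apply: CwMl.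
rewrite -io_C /PU => /(Cu_char _ _ Hq); rewrite expr1 Ef polyCM.
move=> /(proj2 (proj2 (proj1 Hq))) [/(rdiv_unit (proj1 Hq))|].
  have e0 : e != 0 by apply/eqP => e0; move: eU; rewrite e0 unitr0.
  by case; rewrite poly_unitE size_polyC e0 coefC /= eU.
rewrite polyC_prodE => /(prime_dvd_prod (proj1 Hq)) [x0 /mapP [r rs ->] qr].
have Pr : prime_elt r := Ps r rs.
have [e' [e'U Ee']] := prime_dvd_assoc (proj1 Hq) (primeC Pr) qr.
exists r; split=> //; split; first by apply: rdiv_mull; apply: mem_prod_dvd.
rewrite EP /PU Pw_sig sig_u /PV.
have -> : io q = io e'^-1 * kap r by rewrite -io_C Ee' -ioM mulrA mulVr // mul1r.
apply: functional_extensionality => x; apply: propositional_extensionality.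
rewrite /Pw sigM sig_kap; apply: (@Cw_unitg _ _ _ _ _ _ (sig (io e'))).
by rewrite -sigM -ioM mulrV // io1 sig1.
Qed.



Lemma io_neq0 c : c != 0 -> io c != 0.
Proof. by move=> c0; apply/eqP => /io_inj /eqP; rewrite (negPf c0). Qed.

Lemma kap_neq0 r : r != 0 -> kap r != 0.
Proof. by move=> r0; rewrite -io_C; apply: io_neq0; rewrite polyC_eq0. Qed.

Lemma uuX_neq0 N : uu ^+ N != 0.
Proof. by rewrite -io_X -ioX; apply: io_neq0; rewrite expf_eq0 polyX_eq0 andbF. Qed.

Lemma ordU_uX q N : uprime q -> ordP (PU q) (uu ^+ N) = 0%N.
Proof. by move=> Hq; apply: (ordG_not (good_u Hq)); apply: Pw_w; apply: u_G2. Qed.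

Lemma L2 z n : z != 0 -> (0 < n)%N ->
  (forall q, uprime q -> (n %| ordP (PU q) (io z))%N) ->
  exists h e al, e \is a GRing.unit /\ z = e * 'X ^+ al * h ^+ n.
Proof.
move=> z0 n0; have [c [s [cU [Ps Ez]]]] := fact_poly ufdR z0.
elim: (size s) {-2}s (leqnn (size s)) z c cU Ps Ez {z0} => [|k IHk] t Hk z c cU Ps Ez Hdiv.
  case: t Hk Ps Ez => // _ _ Ez; exists 1, c, 0%N; split=> //.
  by rewrite Ez big_nil expr1n expr0 !mulr1.
case: t Hk Ps Ez => [|x t] Hk Ps Ez.
  by exists 1, c, 0%N; split=> //; rewrite Ez big_nil expr1n expr0 !mulr1.
have Px : prime_elt x by apply: Ps; rewrite mem_head.
have Pt : forall y, y \in t -> prime_elt y by move=> y yt; apply: Ps; rewrite in_cons yt orbT.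
have z0 : z != 0 by apply: factored_neq0; exists c, (x :: t).
case: (classic (rdivides x 'X)) => [xX|xX].
  have [e0 [e0U Ee0]] := prime_dvd_assoc Px primeX xX.
  pose z' := (c * e0^-1) * \prod_(y <- t) y.
  have Ez' : z = 'X * z'.
    rewrite Ez big_cons /z'; have -> : x = e0^-1 * 'X by rewrite Ee0 mulrA mulVr // mul1r.
    ring.
  have z'0 : z' != 0.
    by apply: factored_neq0; exists (c * e0^-1), t; split=> //; rewrite unitrM cU unitrV.
  have [h [e [al [eU Ez'']]]] : exists h e al, e \is a GRing.unit /\ z' = e * 'X ^+ al * h ^+ n.
    apply: (IHk t Hk z' (c * e0^-1)) => //; first by rewrite unitrM cU unitrV.
    move=> q Hq; rewrite -(ordG_w 1 (good_u Hq) (io_neq0 z'0)) expr1 -io_X -ioM -Ez'.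
    exact: Hdiv.
  by exists h, e, al.+1; split=> //; rewrite Ez' Ez'' exprS; ring.
have Hx : uprime x by [].
have ox : (0 < ordP (PU x) (io z))%N.
  apply/(ordG_le _ (good_u Hx) (io_neq0 z0)); apply/(Cu_char _ _ Hx); rewrite expr1 Ez big_cons.
  by exists (c * \prod_(y <- t) y); ring.
have /(ordG_le _ (good_u Hx) (io_neq0 z0)) : (n <= ordP (PU x) (io z))%N by apply: dvdn_leq => //; apply: Hdiv.
move=> /(Cu_char _ _ Hx) [y Ey].
have [c' [s' [c'U Ps' Ey' Hs']]] := remove_pow cU Ps Ez Px (etrans Ey (mulrC _ _)).
have y0 : y != 0 by apply: factored_neq0; exists c', s'.
have [h [e [al [eU Eyh]]]] : exists h e al, e \is a GRing.unit /\ y = e * 'X ^+ al * h ^+ n.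
  apply: (IHk s' _ y c' c'U Ps' Ey').
    by move: Hs' Hk; rewrite /= => Hs'' Hk'; lia.
  move=> q Hq; have := Hdiv q Hq; rewrite Ey ioM (ordG_M (good_u Hq)) ?io_neq0 //.
    by rewrite ioX (ordG_X _ (good_u Hq)) ?io_neq0 ?(prime_neq0 Px) // dvdn_addl // dvdn_mulr.
  by rewrite expf_eq0 (negPf (prime_neq0 Px)) andbF.
by exists (h * x), e, al; split=> //; rewrite Ey Eyh exprMn; ring.
Qed.


Variable s : nat.
Variable p : 'I_s -> R.
Variable a : 'I_s -> nat.
Hypothesis p_prime : forall i, prime_elt (p i).
Hypothesis p_nonassoc : forall i j, i != j -> ~ associated (p i) (p j).
Hypothesis a_pos : forall i, (0 < a i)%N.
Hypothesis f_fact : f = \prod_(i < s) p i ^+ a i.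

Lemma prime_dvd_big (I : finType) (P : pred I) (F : I -> R) r :
  prime_elt r -> rdivides r (\prod_(i | P i) F i) -> exists i, P i /\ rdivides r (F i).
Proof.
move=> Pr H; apply: NNPP => Hn; move: H.
apply: (big_ind (fun x => ~ rdivides r x)).
- exact: (@rdiv_unit R r 1 Pr (unitr1 R)).
- by move=> x y Hx Hy /(proj2 (proj2 Pr)) [].
- by move=> i Pi Hi; apply: Hn; exists i.
Qed.

Lemma prime_dvd_pow (r x : R) n : prime_elt r -> rdivides r (x ^+ n) -> rdivides r x.
Proof.
move=> Pr; elim: n => [|n IH]; first by rewrite expr0 => /(@rdiv_unit R r 1 Pr (unitr1 R)).
by rewrite exprS => /(proj2 (proj2 Pr)) [|/IH].
Qed.

Lemma Cv_kap (r t : R) : prime_elt r -> Cw vv (kap r) 1 (kap t) -> rdivides r t.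
Proof.
move=> Pr; rewrite Cv_char sig_kap -!io_C => /(Cu_char _ _ (uprimeC Pr)).
by rewrite expr1 => /dvdC_coef /(_ 0%N); rewrite coefC.
Qed.

Definition gj j := \prod_(i | i != j) p i ^+ a i.

Lemma f_split j : f = p j ^+ a j * gj j.
Proof. by rewrite f_fact (bigD1 j). Qed.

Lemma pj_ndiv j : ~ rdivides (p j) (gj j).
Proof.
move=> /(prime_dvd_big (p_prime j)) [i [ij /(prime_dvd_pow (p_prime j))]].
move=> /(prime_dvd_assoc (p_prime j) (p_prime i)) [e [eU Ee]].
by apply: (p_nonassoc ij); exists e.
Qed.

Lemma Cv_uu j : Cw vv (kap (p j)) (a j) uu.
Proof. by exists 1%N, (kap (gj j)); rewrite expr1 mulrC uv (f_split j) kapM kapX. Qed.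

Lemma ordVu j : ordP (PV (p j)) uu = a j.
Proof.
apply: (ordG_eq (good_v (p_prime j))); first exact: Cv_uu.
move=> [M [y E]]; apply: (@pj_ndiv j); apply: (Cv_kap (p_prime j)).
exists M, (y * vv); apply: (cancel_g domA (v_g0 (p_prime j)) (k := a j)).
transitivity (vv ^+ M * (kap (p j) ^+ a j * kap (gj j))); first ring.
rewrite -kapX -kapM -f_split -uv.
transitivity ((vv ^+ M * uu) * vv); first ring.
by rewrite E expr1 exprS kapX; ring.
Qed.

Lemma ordVv j : ordP (PV (p j)) vv = 0%N.
Proof.
apply: (ordG_not (good_v (p_prime j))); rewrite -[vv]expr1; apply: Pw_w; apply: v_G2.
exact: p_prime.
Qed.

Lemma PV_assoc (r : R) : prime_elt r -> rdivides r f -> exists j, PV r = PV (p j).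
Proof.
move=> Pr; rewrite f_fact => /(prime_dvd_big Pr) [j [_ /(prime_dvd_pow Pr) H]].
have [e [eU Ee]] := prime_dvd_assoc Pr (p_prime j) H; exists j.
rewrite /PV Ee kapM; apply: functional_extensionality => x; apply: propositional_extensionality.
rewrite /Pw; symmetry; apply: (@Cw_unitg _ _ _ _ _ _ (kap e^-1)); exact: kap_unitA.
Qed.

Lemma PV_inj i j : PV (p i) = PV (p j) -> i = j.
Proof.
move=> E; apply/eqP; apply: contraT => ij.
have : PV (p i) (kap (p j)) by rewrite E; apply: Pw_g.
move=> /(Cv_kap (p_prime i)) /(prime_dvd_assoc (p_prime i) (p_prime j)) [e [eU Ee]].
have ji : j != i by rewrite eq_sym.
by exfalso; apply: (p_nonassoc ji); exists e.
Qed.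

Lemma uu_PV j : PV (p j) uu.
Proof. exact: (Cw_le (a_pos j) (Cv_uu j)). Qed.

Lemma PU_notPV q j : uprime q -> PU q <> PV (p j).
Proof.
move=> Hq E; have := uu_PV j; rewrite -E -[uu]expr1; apply: Pw_w; exact: u_G2.
Qed.

Lemma classify2 (P : A -> Prop) : height_one P ->
  (exists q, uprime q /\ P = PU q) \/ (exists j, P = PV (p j)).
Proof.
move=> HP; case: (ho_classify HP) => [H|[r [Pr [rf ->]]]]; first by left.
by right; apply: PV_assoc.
Qed.


Lemma gcd_mul (k : nat) : (\big[gcdn/0]_(i < s) (k * a i) = k * \big[gcdn/0]_(i < s) a i)%N.
Proof. by rewrite (big_morph (muln k) (muln_gcdr k) (muln0 k)). Qed.

Lemma dvd_gcd1 n k : (\big[gcdn/0]_(i < s) a i = 1)%N -> (forall i, n %| k * a i)%N -> (n %| k)%N.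
Proof.
move=> g1 H; have : (n %| \big[gcdn/0]_(i < s) (k * a i))%N by apply/dvdn_biggcdP => i _; apply: H.
by rewrite gcd_mul g1 muln1.
Qed.

Lemma dvd_of_int (n m : nat) (W : int) : m%:Z = n%:Z * W -> (n %| m)%N.
Proof.
move=> E; have : (n%:Z %| m%:Z)%Z by rewrite E dvdz_mulr // dvdzz.
by rewrite dvdzE !absz_nat.
Qed.

Lemma ordG_io_M w g c d : good w g -> c != 0 -> d != 0 ->
  ordP (Pw w g) (io (c * d)) = (ordP (Pw w g) (io c) + ordP (Pw w g) (io d))%N.
Proof. by move=> Hg c0 d0; rewrite ioM (ordG_M Hg) ?io_neq0. Qed.

Lemma ordG_io_X w g c n : good w g -> c != 0 ->
  ordP (Pw w g) (io (c ^+ n)) = (n * ordP (Pw w g) (io c))%N.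
Proof. by move=> Hg c0; rewrite ioX (ordG_X _ Hg) ?io_neq0. Qed.

Lemma uu_neq0 : uu != 0.
Proof. by rewrite -[uu]expr1; apply: uuX_neq0. Qed.

Lemma vv_neq0 : vv != 0.
Proof. by apply/eqP => /(congr1 sig); rewrite sig_v sig0; apply/eqP; apply: uu_neq0. Qed.

Lemma ord_uN w g N x : good w g -> x != 0 ->
  ordP (Pw w g) (uu ^+ N * x) = (N * ordP (Pw w g) uu + ordP (Pw w g) x)%N.
Proof. by move=> Hg x0; rewrite (ordG_M Hg) ?uuX_neq0 // (ordG_X _ Hg) ?uu_neq0. Qed.

Lemma ord_ez w g e al h n : good w g -> e \is a GRing.unit -> h != 0 ->
  ordP (Pw w g) (io (e * 'X ^+ al * h ^+ n)) =
  (al * ordP (Pw w g) uu + n * ordP (Pw w g) (io h))%N.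
Proof.
move=> Hg eU h0; have e0 : e != 0 by apply/eqP => e0; move: eU; rewrite e0 unitr0.
rewrite (ordG_io_M Hg) ?mulf_neq0 ?expf_neq0 ?polyX_eq0 //.
rewrite (ordG_io_M Hg) ?expf_neq0 ?polyX_eq0 // !(ordG_io_X _ Hg) ?polyX_eq0 //.
by rewrite (ordG_unit Hg (io_unitA eU)) io_X.
Qed.

Lemma s_pos : (0 < s)%N.
Proof.
rewrite lt0n; apply/eqP => s0; move: fN; rewrite f_fact big1 ?unitr1 //.
by move=> [m Hm]; exfalso; rewrite s0 in Hm.
Qed.

Lemma dfacts : (\big[gcdn/0]_(i < s) a i != 1)%N ->
  (1 < \big[gcdn/0]_(i < s) a i)%N /\ forall i, (\big[gcdn/0]_(i < s) a i %| a i)%N.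
Proof.
move=> gN; set d := \big[gcdn/0]_(i < s) a i in gN *.
have dd : forall i, (d %| a i)%N by move=> i; apply: (biggcdn_inf i).
split=> //; have i0 : 'I_s := Ordinal s_pos.
have : d != 0%N by apply/eqP => d0; have := dd i0; rewrite d0 dvd0n => /eqP ai0; have := a_pos i0; rewrite ai0.
by move: gN; case: d {dd} => [|[|d]].
Qed.

Lemma T1 : (\big[gcdn/0]_(i < s) a i = 1)%N -> class_group_torsion_free A.
Proof.
move=> g1 D n HD n0 [x1 [y1 [x10 [y10 Hxy]]]].
have [Na [xa Ea]] := U1 x1; have [Nb [xb Eb]] := U1 y1.
pose X1 := 'X ^+ Nb * xa; pose Y1 := 'X ^+ Na * xb.
have EX : io X1 = uu ^+ (Na + Nb) * x1 by rewrite /X1 ioM ioX io_X -Ea exprD; ring.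
have EY : io Y1 = uu ^+ (Na + Nb) * y1 by rewrite /Y1 ioM ioX io_X -Eb exprD; ring.
have X10 : X1 != 0.
  by apply/eqP => X0; move: x10; rewrite (@upow_reg (Na + Nb) x1) ?eqxx // -EX X0 io0.
have Y10 : Y1 != 0.
  by apply/eqP => Y0; move: y10; rewrite (@upow_reg (Na + Nb) y1) ?eqxx // -EY Y0 io0.
case: n n0 Hxy => // n _ Hxy.
pose z := X1 * Y1 ^+ n.
have z0 : z != 0 by rewrite mulf_neq0 // expf_neq0.
have rel : forall w g, good w g -> height_one (Pw w g) ->
   D (Pw w g) * n.+1%:Z = (ordP (Pw w g) (io X1))%:Z - (ordP (Pw w g) (io Y1))%:Z.
  move=> w g Hg Ho; have := Hxy _ Ho; rewrite EX EY !(ord_uN _ Hg) //; lia.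
have zrel : forall w g, good w g ->
    ordP (Pw w g) (io z) = (ordP (Pw w g) (io X1) + n * ordP (Pw w g) (io Y1))%N.
  by move=> w g Hg; rewrite /z (ordG_io_M Hg) ?expf_neq0 // (ordG_io_X _ Hg).
have divz : forall q, uprime q -> (n.+1 %| ordP (PU q) (io z))%N.
  move=> q Hq; apply: (@dvd_of_int _ _ (D (PU q) + (ordP (PU q) (io Y1))%:Z)).
  have := rel _ _ (good_u Hq) (PU_ho Hq); have := zrel _ _ (good_u Hq); rewrite -/(PU q); nia.
have [h [e [al [eU Ez]]]] := L2 z0 (ltn0Sn n) divz.
have h0 : h != 0 by apply/eqP => h0; move: z0; rewrite Ez h0 expr0n /= mulr0 eqxx.
have ozE : forall w g, good w g ->
    ordP (Pw w g) (io z) = (al * ordP (Pw w g) uu + n.+1 * ordP (Pw w g) (io h))%N.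
  by move=> w g Hg; rewrite Ez (ord_ez _ _ Hg).
have dal : (n.+1 %| al)%N.
  apply: (dvd_gcd1 g1) => j.
  apply: (@dvd_of_int _ _ (D (PV (p j)) + (ordP (PV (p j)) (io Y1))%:Z - (ordP (PV (p j)) (io h))%:Z)).
  have := rel _ _ (good_v (p_prime j)) (PV_ho (p_prime j)).
  have := zrel _ _ (good_v (p_prime j)); have := ozE _ _ (good_v (p_prime j)).
  rewrite -/(PV (p j)) ordVu; nia.
have [k Ek] : exists k, al = (k * n.+1)%N by exists (al %/ n.+1)%N; rewrite divnK.
exists (io h * uu ^+ k), (io Y1); split.
  by rewrite -io_X -ioX -ioM io_neq0 // mulf_neq0 // expf_neq0 // polyX_eq0.
split; first exact: io_neq0.
move=> P HP; case: (classify2 HP) => [[q [Hq ->]]|[j ->]].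
  have := rel _ _ (good_u Hq) (PU_ho Hq); have := zrel _ _ (good_u Hq); have := ozE _ _ (good_u Hq).
  rewrite -/(PU q) -[uu]expr1 !(ordU_uX 1 Hq) mulrC (ordG_M (good_u Hq)) ?io_neq0 ?uuX_neq0 //.
  rewrite (ordU_uX k Hq) -/(PU q); nia.
have := rel _ _ (good_v (p_prime j)) (PV_ho (p_prime j)).
have := zrel _ _ (good_v (p_prime j)); have := ozE _ _ (good_v (p_prime j)).
rewrite -/(PV (p j)) ordVu mulrC (ordG_M (good_v (p_prime j))) ?io_neq0 ?uuX_neq0 //.
rewrite (ordG_X _ (good_v (p_prime j))) ?uu_neq0 // -/(PV (p j)) ordVu Ek; nia.
Qed.



Lemma T2 : class_group_torsion_free A -> (\big[gcdn/0]_(i < s) a i = 1)%N.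
Proof.
move=> TF; apply: NNPP => /eqP gN; have [d1 dd] := dfacts gN.
set d := \big[gcdn/0]_(i < s) a i in d1 dd gN.
have d0 : (0 < d)%N by apply: ltnW.
have i0 : 'I_s := Ordinal s_pos.
pose ind := fun (P : A -> Prop) (i : 'I_s) =>
  if excluded_middle_informative (P = PV (p i)) then ((a i %/ d)%N)%:Z else 0.
have ind1 : forall P i, P = PV (p i) -> ind P i = ((a i %/ d)%N)%:Z.
  by move=> P i E; rewrite /ind; case: (excluded_middle_informative (P = PV (p i))).
have ind0 : forall P i, P <> PV (p i) -> ind P i = 0.
  by move=> P i E; rewrite /ind; case: (excluded_middle_informative (P = PV (p i))).
pose D := fun P : A -> Prop => \sum_(i < s) ind P i.
have DV : forall j, D (PV (p j)) = ((a j %/ d)%N)%:Z.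
  move=> j; rewrite /D (bigD1 j) //= ind1 //.
  rewrite big1 ?addr0 // => i ij; apply: ind0 => E.
  by move: ij; rewrite (PV_inj E) eqxx.
have DU : forall q, uprime q -> D (PU q) = 0.
  move=> q Hq; rewrite /D big1 // => i _; apply: ind0 => E.
  by case: (PU_notPV Hq E).
have Dz : forall P, ~ (exists i, P = PV (p i)) -> D P = 0.
  move=> P nE; rewrite /D big1 // => i _; apply: ind0 => E.
  by case: nE; exists i.
have HD : weil_divisor D.
  split.
    move=> P H; case: (classic (exists i, P = PV (p i))) => [[i ->]|nE].
      exact: PV_ho.
    by move: H; rewrite Dz // eqxx.
  exists [seq PV (p i) | i <- enum 'I_s] => P H.
  case: (classic (exists i, P = PV (p i))) => [[i ->]|nE].
    have In_map : forall (l : seq 'I_s), List.In i l -> List.In (PV (p i)) [seq PV (p j) | j <- l].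
      by elim=> [|y l IH] //= [->|/IH]; [left|right].
    by apply: In_map; apply: In_mem; rewrite mem_enum.
  by move: H; rewrite Dz // eqxx.
have Hprin : principal_divisor (fun P => D P *+ d).
  exists uu, 1; split; first exact: uu_neq0.
  split; first exact: oner_neq0.
  move=> P HP; case: (classify2 HP) => [[q [Hq ->]]|[j ->]].
    rewrite DU // mul0rn -[uu]expr1 (ordU_uX 1 Hq) (ordG_unit (good_u Hq) (mulr1 1)).
    by [].
  rewrite DV ordVu (ordG_unit (good_v (p_prime j)) (mulr1 1)).
  have := divnK (dd j); lia.
have [c [e [c0 [e0 Hce]]]] := TF D d HD d0 Hprin.
have [Na [xa Ea]] := U1 c; have [Nb [xb Eb]] := U1 e.
pose X1 := 'X ^+ Nb * xa; pose Y1 := 'X ^+ Na * xb.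
have EX : io X1 = uu ^+ (Na + Nb) * c by rewrite /X1 ioM ioX io_X -Ea exprD; ring.
have EY : io Y1 = uu ^+ (Na + Nb) * e by rewrite /Y1 ioM ioX io_X -Eb exprD; ring.
have X10 : X1 != 0.
  by apply/eqP => X0; move: c0; rewrite (@upow_reg (Na + Nb) c) ?eqxx // -EX X0 io0.
have Y10 : Y1 != 0.
  by apply/eqP => Y0; move: e0; rewrite (@upow_reg (Na + Nb) e) ?eqxx // -EY Y0 io0.
have rel : forall w g, good w g -> height_one (Pw w g) ->
   D (Pw w g) = (ordP (Pw w g) (io X1))%:Z - (ordP (Pw w g) (io Y1))%:Z.
  move=> w g Hg Ho; have := Hce _ Ho; rewrite EX EY !(ord_uN _ Hg) //; lia.
have ai0 := a_pos i0.
move Hn : (a i0) => n; case: n Hn => [|n] Hn; first by rewrite Hn in ai0.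
pose z := X1 * Y1 ^+ n.
have z0 : z != 0 by rewrite mulf_neq0 // expf_neq0.
have zrel : forall w g, good w g ->
    ordP (Pw w g) (io z) = (ordP (Pw w g) (io X1) + n * ordP (Pw w g) (io Y1))%N.
  by move=> w g Hg; rewrite /z (ordG_io_M Hg) ?expf_neq0 // (ordG_io_X _ Hg).
have divz : forall q, uprime q -> (n.+1 %| ordP (PU q) (io z))%N.
  move=> q Hq; apply: (@dvd_of_int _ _ ((ordP (PU q) (io Y1))%:Z)).
  have := rel _ _ (good_u Hq) (PU_ho Hq); have := zrel _ _ (good_u Hq); rewrite -/(PU q) DU //; nia.
have [h [e' [al [eU Ez]]]] := L2 z0 (ltn0Sn n) divz.
have h0 : h != 0 by apply/eqP => h0; move: z0; rewrite Ez h0 expr0n /= mulr0 eqxx.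
have := rel _ _ (good_v (p_prime i0)) (PV_ho (p_prime i0)).
have := zrel _ _ (good_v (p_prime i0)).
have := ord_ez al n.+1 (good_v (p_prime i0)) eU h0.
rewrite -Ez -/(PV (p i0)) DV ordVu Hn => H1 H2 H3.
have : (n.+1 %| a i0 %/ d)%N.
  apply: (@dvd_of_int _ _ ((al + ordP (PV (p i0)) (io h))%:Z - (ordP (PV (p i0)) (io Y1))%:Z)).
  rewrite Hn; nia.
rewrite -Hn => /dvdn_leq; rewrite divn_gt0 // (dvdn_leq ai0 (dd i0)) => /(_ isT).
by rewrite leqNgt ltn_Pdiv.
Qed.

Lemma E1 : (\big[gcdn/0]_(i < s) a i = 1)%N <->
  ~ exists k g c, (2 <= k)%N /\ c \is a GRing.unit /\ f = c * g ^+ k.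
Proof.
split.
  move=> g1 [k [g [c [k2 [cU Ef]]]]].
  have c0 : c != 0 by apply/eqP => c0; move: cU; rewrite c0 unitr0.
  have kn0 : (k == 0%N) = false by apply/negbTE; rewrite -lt0n; apply: leq_trans k2.
  have g0 : g != 0 by apply/eqP => g0; move: f0; rewrite Ef g0 expr0n kn0 mulr0 eqxx.
  have kd : forall j, (k %| a j)%N.
    move=> j; have Hg := good_v (p_prime j).
    have H1 : ordP (PV (p j)) (kap f) = a j.
      by rewrite -uv (ordG_M Hg) ?uu_neq0 ?vv_neq0 // ordVu ordVv addn0.
    have : ordP (PV (p j)) (kap f) = (k * ordP (PV (p j)) (kap g))%N.
      rewrite Ef kapM kapX (ordG_M Hg) ?kap_neq0 ?expf_neq0 //; last first.
        by rewrite -kapX kap_neq0 // expf_neq0.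
      by rewrite (ordG_unit Hg (kap_unitA cU)) (ordG_X _ Hg) ?kap_neq0.
    by rewrite H1 => ->; apply: dvdn_mulr.
  have : (k %| 1)%N by rewrite -g1; apply/dvdn_biggcdP => i _; apply: kd.
  by rewrite dvdn1 => /eqP k1; rewrite k1 in k2.
move=> H; apply: NNPP => /eqP gN; apply: H; have [d1 dd] := dfacts gN.
set d := \big[gcdn/0]_(i < s) a i in d1 dd gN.
exists d, (\prod_(i < s) p i ^+ (a i %/ d)%N), 1; split=> //; split; first exact: unitr1.
rewrite mul1r -prodrXl f_fact; apply: eq_bigr => i _; by rewrite -exprM divnK.
Qed.

End RingA.

Unset Implicit Arguments.

Theorem corollary4p5
  (K : closedFieldType) (charK0 : [pchar K] =i pred0)
  (R : idomainType) (iota : {rmorphism K -> R})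
  (fgR : fin_gen_alg iota) (ufdR : factorial_domain R)
  (f : R) (f_nonconst : forall c : K, f != iota c)
  (f_nonunit : f \isn't a GRing.unit)
  (s : nat) (p : 'I_s -> R) (a : 'I_s -> nat)
  (p_prime : forall i, prime_elt (p i))
  (p_nonassoc : forall i j, i != j -> ~ associated (p i) (p j))
  (a_pos : forall i, (0 < a i)%N)
  (f_fact : f = \prod_(i < s) p i ^+ a i)
  (A : comNzRingType) (pi : {rmorphism {poly {poly R}} -> A})
  (pi_surj : forall x : A, exists q, pi q = x)
  (pi_ker : forall q, pi q = 0 <->
     exists h, q = h * ('X%:P * 'X - (f%:P)%:P)) :
  (class_group_torsion_free A <-> (\big[gcdn/0%N]_(i < s) a i = 1)%N) /\
  (class_group_torsion_free A <->
     ~ exists (k : nat) (g c : R), (2 <= k)%N /\ c \is a GRing.unit /\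
         f = c * g ^+ k).
Proof.
have f0 : f != 0 by move: (f_nonconst 0); rewrite rmorph0.
have H1 := T1 f0 pi_surj pi_ker ufdR f_nonunit p_prime p_nonassoc f_fact.
have H2 := T2 f0 pi_surj pi_ker ufdR f_nonunit p_prime p_nonassoc a_pos f_fact.
have H3 := E1 f0 pi_surj pi_ker ufdR f_nonunit p_prime p_nonassoc a_pos f_fact.
split; first by split; [apply: H2|apply: H1].
by split => [/H2 /H3|/H3 /H1].
Qed.
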